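(* Let $G=(V,E,H)$ be a HEDG and $\mathbb{P}_V$ a probability distribution on $\mathcal{X}_V=\prod_{v\in V}\mathcal{X}_v$ (standard Borel spaces). If $(G,\mathbb{P}_V)$ satisfies the directed global Markov property, then it satisfies the general directed global Markov property. If moreover $\{v,w\}\in H$ for all $v\in V$ and all $w\in\mathrm{Sc}^G(v)$, then the converse implication also holds.
   Context: HEDG $G=(V,E,H)$: $V$ finite, $E\subseteq V\times V$ (self-loops allowed), $H$ a simplicial complex on $V$ (contains singletons, closed under subsets); $v\leftrightarrow w$ for distinct $v,w$ with $\{v,w\}\in H$. $\mathrm{Anc}^G(v)$, $\mathrm{Desc}^G(v)$ include $v$; $\mathrm{Sc}^G(v)=\mathrm{Anc}^G(v)\cap\mathrm{Desc}^G(v)$. Paths: node sequences (repetitions allowed) with consecutive nodes joined by $\to,\leftarrow,\leftrightarrow$; an intermediate node $v_i$ is a collider if both adjacent edges have an arrowhead at $v_i$, otherwise a non-collider. d-separation $X\perp^d_GY\mid Z$: every path from $X$ to $Y$ has an endnode in $Z$, or a collider not in $\mathrm{Anc}^G(Z)$, or a non-collider in $Z$. $\sigma$-separation $X\perp^\sigma_GY\mid Z$: every path from $X$ to $Y$ has an endnode in $Z$, or a collider not in $\mathrm{Anc}^G(Z)$, or a non-collider $v_i\in Z$ with an adjacent path edge $v_i\to v_{i+1}$, $v_{i+1}\notin\mathrm{Sc}^G(v_i)$, or $v_{i-1}\leftarrow v_i$, $v_{i-1}\notin\mathrm{Sc}^G(v_i)$. For $X,Y,Z\subseteq V$, $X\perp_{\mathbb{P}_V}Y\mid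 Z$ denotes conditional independence of the coordinate projections. Directed global Markov property: $X\perp^d_GY\mid Z\Rightarrow X\perp_{\mathbb{P}_V}Y\mid Z$ for all $X,Y,Z$. General directed global Markov property: $X\perp^\sigma_GY\mid Z\Rightarrow X\perp_{\mathbb{P}_V}Y\mid Z$ for all $X,Y,Z$. *)

(* Defs.v *)
From HB Require Import structures.
From mathcomp Require Import all_boot all_order all_algebra.
From mathcomp Require Import all_classical all_reals all_analysis.
Set Implicit Arguments. Unset Strict Implicit. Unset Printing Implicit Defensive.
Import Order.TTheory GRing.Theory Num.Theory.
Local Open Scope ring_scope.

Definition simplicial_complex (V : finType) (H : {set {set V}}) : Prop :=
  (forall v : V, [set v] \in H) /\
  (forall A B : {set V}, A \in H -> B \subset A -> B \in H).

(* Kinds of edges along a path step from a to b: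
   Fwd : a -> b,  Bwd : a <- b,  Bi : a <-> b. *)
Inductive ekind := Fwd | Bwd | Bi.
Definition is_fwd (k : ekind) : bool := if k is Fwd then true else false.
Definition is_bwd (k : ekind) : bool := if k is Bwd then true else false.

Definition valid_step (V : finType) (E : rel V) (H : {set {set V}})
  (a : V) (k : ekind) (b : V) : bool :=
  match k with
  | Fwd => E a b
  | Bwd => E b a
  | Bi => (a != b) && ([set a; b] \in H)
  end.

Fixpoint is_path (V : finType) (E : rel V) (H : {set {set V}})
  (x : V) (p : seq (ekind * V)) : bool :=
  match p with
  | [::] => true
  | (k, y) :: q => valid_step E H x k y && is_path E H y q
  end.

(* i-th node of the path (nodes numbered 0 .. size p) *)
Definition pnode (V : finType) (x0 : V) (p : seq (ekind * V)) (i : nat) : V :=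
  nth x0 (x0 :: map snd p) i.
(* kind of the edge between node i-1 and node i (for 1 <= i <= size p) *)
Definition pkind (V : finType) (p : seq (ekind * V)) (i : nat) : ekind :=
  nth Fwd (map fst p) i.-1.
Definition pend (V : finType) (x0 : V) (p : seq (ekind * V)) : V :=
  last x0 (map snd p).

(* node i is a collider: arrowheads at node i on both adjacent edges *)
Definition collider (V : finType) (p : seq (ekind * V)) (i : nat) : bool :=
  ~~ is_bwd (pkind p i) && ~~ is_fwd (pkind p i.+1).

Definition anc (V : finType) (E : rel V) (v : V) : {set V} :=
  [set u | connect E u v].
Definition desc (V : finType) (E : rel V) (v : V) : {set V} :=
  [set w | connect E v w].
Definition sc (V : finType) (E : rel V) (v : V) : {set V} :=
  anc E v :&: desc E v.
Definition ancS (V : finType) (E : rel V) (Z : {set V}) : {set V} :=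
  [set u | [exists z in Z, connect E u z]].

Definition d_blocked (V : finType) (E : rel V) (Z : {set V})
  (x0 : V) (p : seq (ekind * V)) : bool :=
  [|| x0 \in Z, pend x0 p \in Z |
   [exists i : 'I_(size p), (0 < i)%N &&
      (if collider p i then pnode x0 p i \notin ancS E Z
       else pnode x0 p i \in Z)]].

Definition sigma_blocked (V : finType) (E : rel V) (Z : {set V})
  (x0 : V) (p : seq (ekind * V)) : bool :=
  [|| x0 \in Z, pend x0 p \in Z |
   [exists i : 'I_(size p), (0 < i)%N &&
      (if collider p i then pnode x0 p i \notin ancS E Z
       else (pnode x0 p i \in Z) &&
            ((is_fwd (pkind p i.+1) &&
                (pnode x0 p i.+1 \notin sc E (pnode x0 p i))) ||
             (is_bwd (pkind p i) &&
                (pnode x0 p i.-1 \notin sc E (pnode x0 p i)))))]].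

Definition dsep (V : finType) (E : rel V) (H : {set {set V}})
  (X Y Z : {set V}) : Prop :=
  forall (x0 : V) (p : seq (ekind * V)), is_path E H x0 p ->
    x0 \in X -> pend x0 p \in Y -> d_blocked E Z x0 p.

Definition sigmasep (V : finType) (E : rel V) (H : {set {set V}})
  (X Y Z : {set V}) : Prop :=
  forall (x0 : V) (p : seq (ekind * V)), is_path E H x0 p ->
    x0 \in X -> pend x0 p \in Y -> sigma_blocked E Z x0 p.

Local Open Scope classical_set_scope.

(* Standard Borel space (Kuratowski): Borel-isomorphic to a Borel subset of R. *)
Definition standard_borel (R : realType) (dT : measure_display)
  (T : measurableType dT) : Prop :=
  exists f : T -> R, [/\ measurable_fun setT f, injective f &
    forall B : set T, measurable B -> measurable (f @` B)].

Definition gen_sigma (V : finType) (dT : V -> measure_display)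
  (T : forall v, measurableType (dT v)) (Omega : Type)
  (X : forall v, Omega -> T v) (A : {set V}) : set (set Omega) :=
  <<s [set S | exists v, exists B : set (T v),
          [/\ v \in A, measurable B & S = X v @^-1` B]] >>.

(* Conditional independence X_A _||_ X_B | X_C:
   for every event S in sigma(X_A), P(S | X_B, X_C) = P(S | X_C) a.s., i.e.
   there is a sigma(X_C)-measurable integrable phi with
   P(S /\ C) = int_C phi dP for every C in sigma(X_B, X_C). *)
Definition cond_indep (R : realType) (V : finType) (dT : V -> measure_display)
  (T : forall v, measurableType (dT v)) (d : measure_display)
  (Omega : measurableType d) (P : probability Omega R)
  (X : forall v, Omega -> T v) (A B C : {set V}) : Prop :=
  forall S, gen_sigma X A S ->
    exists phi : Omega -> R,
      [/\ forall D : set R, measurable D -> gen_sigma X C (phi @^-1` D),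
          P.-integrable setT (EFin \o phi) &
          forall U, gen_sigma X (B :|: C) U ->
            P (S `&` U) = (\int[P]_(x in U) (phi x)%:E)%E].

Definition directed_global_Markov (R : realType) (V : finType) (E : rel V)
  (H : {set {set V}}) (dT : V -> measure_display)
  (T : forall v, measurableType (dT v)) (d : measure_display)
  (Omega : measurableType d) (P : probability Omega R)
  (X : forall v, Omega -> T v) : Prop :=
  forall A B C : {set V}, dsep E H A B C -> cond_indep P X A B C.

Definition general_directed_global_Markov (R : realType) (V : finType)
  (E : rel V) (H : {set {set V}}) (dT : V -> measure_display)
  (T : forall v, measurableType (dT v)) (d : measure_display)
  (Omega : measurableType d) (P : probability Omega R)
  (X : forall v, Omega -> T v) : Prop :=
  forall A B C : {set V}, sigmasep E H A B C -> cond_indep P X A B C.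

(* Main.v *)
Require Import Defs.
From HB Require Import structures.
From mathcomp Require Import all_boot all_order all_algebra.
From mathcomp Require Import all_classical all_reals all_analysis.

Section Helpers.
Variables (V : finType) (E : rel V) (H : {set {set V}}) (Z : {set V}).

Fixpoint gopen (g : V -> ekind -> V -> ekind -> V -> bool)
  (ctx : option (V * ekind)) (x : V) (p : seq (ekind * V)) : bool :=
  match p with
  | [::] => true
  | (k, w) :: q =>
      (match ctx with None => true | Some (u, kl) => ~~ g u kl x k w end)
      && gopen g (Some (x, k)) w q
  end.

Lemma pnodeS (x : V) k y q i : (i <= size q)%N ->
  pnode x ((k, y) :: q) i.+1 = pnode y q i.
Proof.
case: i => [|i] Hi //.
rewrite /pnode /=. apply: set_nth_default. by rewrite size_map.
Qed.

Lemma gopenP g x p : gopen g None x p =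
  ~~ [exists i : 'I_(size p), (0 < i)%N &&
       g (pnode x p i.-1) (pkind p i) (pnode x p i) (pkind p i.+1)
         (pnode x p i.+1)].
Proof.
elim: p x => [|[k y] q IH] x.
  by apply/esym/negP => /existsP [[i Hi]].
case: q IH => [|[k2 y2] r] IH.
  apply/esym/negP => /existsP [[[|i] Hi]] //=.
have E1 := IH y. simpl in E1.
rewrite /= E1 -negb_or; congr (~~ _); apply/idP/idP.
- case/orP => [Hg | /existsP [[[|j] Hj] /andP [_ Hg]]] //.
    have H1 : (1 < size ((k, y) :: (k2, y2) :: r))%N by [].
    by apply/existsP; exists (Ordinal H1).
  have Hj' : (j.+2 < size ((k, y) :: (k2, y2) :: r))%N by [].
  apply/existsP; exists (Ordinal Hj'). simpl in Hj.
  rewrite /= [pnode x _ j.+1]pnodeS ?[pnode x _ j.+2]pnodeS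
    ?[pnode x _ j.+3]pnodeS //=; try (apply: ltnW; apply: ltnW; done);
    try (apply: ltnW; done).
- case/existsP => [[[|[|j]] Hj] /andP [_ Hg]] //.
    by apply/orP; left.
  apply/orP; right. simpl in Hj.
  have Hj' : (j.+1 < size ((k2, y2) :: r))%N by [].
  apply/existsP; exists (Ordinal Hj').
  move: Hg. rewrite /= [pnode x _ j.+1]pnodeS ?[pnode x _ j.+2]pnodeS
    ?[pnode x _ j.+3]pnodeS //=; try (apply: ltnW; apply: ltnW; done);
    try (apply: ltnW; done).
Qed.


Definition gd (u : V) (kl : ekind) (v : V) (kr : ekind) (w : V) : bool :=
  if ~~ is_bwd kl && ~~ is_fwd kr then v \notin ancS E Z else v \in Z.

Definition gs (u : V) (kl : ekind) (v : V) (kr : ekind) (w : V) : bool :=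
  if ~~ is_bwd kl && ~~ is_fwd kr then v \notin ancS E Z
  else (v \in Z) && ((is_fwd kr && (w \notin sc E v)) ||
                     (is_bwd kl && (u \notin sc E v))).

Lemma d_blockedE x p :
  d_blocked E Z x p = [|| x \in Z, pend x p \in Z | ~~ gopen gd None x p].
Proof. by rewrite gopenP negbK. Qed.

Lemma s_blockedE x p :
  sigma_blocked E Z x p = [|| x \in Z, pend x p \in Z | ~~ gopen gs None x p].
Proof. by rewrite gopenP negbK. Qed.

Lemma inZ_ancS v : v \in Z -> v \in ancS E Z.
Proof. by move=> Hv; rewrite inE; apply/existsP; exists v; rewrite Hv connect0. Qed.

Lemma someNone (T : Type) (a : T) : Some a = None -> False.
Proof. by []. Qed.

Definition ahl (k : ekind) := ~~ is_bwd k.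

Lemma build (Hsc : forall v w : V, w \in sc E v -> [set v; w] \in H) :
  forall p x (cold cnew : option (V * ekind)),
  is_path E H x p -> gopen gs cold x p -> pend x p \notin Z ->
  (cold = None -> cnew = None) ->
  (x \in Z -> exists u k, cnew = Some (u, k) /\ ahl k) ->
  (forall u k, cnew = Some (u, k) -> ahl k -> x \notin Z ->
     (exists u0 kl, cold = Some (u0, kl) /\ ahl kl) \/ x \in ancS E Z) ->
  exists p', [/\ is_path E H x p', pend x p' = pend x p & gopen gd cnew x p'].
Proof.
elim => [|[k w] q IH] x cold cnew.
  by move=> _ _ _ _ _ _; exists [::].
rewrite /= => /andP [Hv Hp] /andP [Hsx Hsq] Hend Hcn I1 I2.
have Hsx' : forall u0 kl, cold = Some (u0, kl) -> ~~ gs u0 kl x k w.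
  by move=> u0 kl Hc; rewrite Hc in Hsx.
case: (eqVneq w x) => [Ewx | Nwx].
- (* self loop: skip *)
  subst w.
  edestruct (IH x (Some (x, k)) cnew Hp Hsq Hend (fun e => False_ind _ (@someNone _ _ e)) I1) as [p' [H1 H2 H3]].
    2: by exists p'.
  move=> u k' Hc Ha HxZ.
  case: k Hv Hsx Hsx' Hsq Hend => Hv Hsx Hsx' Hsq Hend.
  + by left; exists x, Fwd.
  + right. have [[u0 [kl [Hc0 Hkl]]]|//] := I2 u k' Hc Ha HxZ.
    have := Hsx' u0 kl Hc0. rewrite /gs /= -/(ahl kl) Hkl /=.
    by rewrite negbK.
  + by rewrite /valid_step eqxx in Hv.
- set k' := match k with Fwd => if x \in Z then Bi else Fwd
            | Bwd => if w \in Z then Bi else Bwd | Bi => Bi end.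
  have S1 : w \in Z -> exists u k0, Some (x, k') = Some (u, k0) /\ ahl k0.
    move=> HwZ. exists x, k'; split => //.
    by rewrite /k' /ahl; case: (k); rewrite ?HwZ //; case: ifP.
  have S2 : forall u k1, Some (x, k') = Some (u, k1) -> ahl k1 -> w \notin Z ->
     (exists u0 kl, Some (x, k) = Some (u0, kl) /\ ahl kl) \/ w \in ancS E Z.
    move=> u k1 [_ <-] Ha HwZ. left; exists x, k; split => //.
    move: Ha; rewrite /k' /ahl; case: (k) => //.
    by rewrite (negbTE HwZ).
  have [p'' [H1 H2 H3]] := IH w (Some (x, k)) (Some (x, k')) Hp Hsq Hend
     (fun e => False_ind _ (@someNone _ _ e)) S1 S2.
  exists ((k', w) :: p''); split => //=.
  + rewrite H1 andbT /k'.
    case Ek: k Hv => Hv //; rewrite Ek in Hsx' Hsq Hp Hend.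
    - case: ifP => HxZ //. rewrite /valid_step eq_sym Nwx /=.
      apply: Hsc.
      have [u [kl [Hc _]]] := I1 HxZ.
      have Hco : cold <> None by move=> e; rewrite (Hcn e) in Hc.
      case Ec: cold Hco => [[u0 kl0]|//] _.
      have := Hsx' u0 kl0 Ec. rewrite /gs /= andbF /= HxZ /=.
      by rewrite negb_or negbK => /andP [].
    - case: ifP => HwZ //. rewrite /valid_step eq_sym Nwx /=.
      rewrite finset.setUC. apply: Hsc.
      case Eq: q Hsq Hend => [|[k2 w2] r] /=.
        by move=> _; rewrite /pend /= HwZ.
      move=> /andP [Hg _] _. move: Hg.
      by rewrite /gs /= HwZ /= negb_or negbK => /andP [].
  + case Ecn: cnew I1 I2 => [[u kl']|//] I1 I2.
    rewrite /gd.
    case HxZ: (x \in Z).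
    - have [u1 [k1 [Hc Hk1]]] := I1 HxZ. case: Hc => _ Ek1; subst k1.
      rewrite -/(ahl kl') Hk1 /=.
      have -> : ~~ is_fwd k' by rewrite /k'; case: (k) => //=; rewrite ?HxZ //; case: ifP.
      by rewrite inZ_ancS.
    - case Hkl: (~~ is_bwd kl') => //=.
      case Hk': (is_fwd k') => //=.
      have [[u0 [kl [Hc0 Hkl0]]]|->//] := I2 u kl' erefl Hkl (negbT HxZ).
      have := Hsx' u0 kl Hc0.
      have Hk : ~~ is_fwd k.
        by move: Hk'; rewrite /k'; case: (k) => //=; rewrite ?HxZ //; case: ifP.
      by rewrite /gs -/(ahl kl) Hkl0 Hk /= => ->.
Qed.

End Helpers.

Lemma sigma_d (V : finType) (E : rel V) (H : {set {set V}}) (A B C : {set V}) :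
  sigmasep E H A B C -> dsep E H A B C.
Proof.
move=> Hs x p Hp HA HB. have := Hs x p Hp HA HB.
rewrite /sigma_blocked /d_blocked.
case/or3P => [->|->|/existsP [i /andP [Hi Hc]]]; rewrite ?orbT //.
apply/or3P; apply: Or33; apply/existsP; exists i; rewrite Hi /=.
by move: Hc; case: ifP => // _ /andP [].
Qed.

Lemma d_sigma (V : finType) (E : rel V) (H : {set {set V}}) (A B C : {set V})
  (Hsc : forall v w : V, w \in sc E v -> [set v; w] \in H) :
  dsep E H A B C -> sigmasep E H A B C.
Proof.
move=> Hd x p Hp HA HB.
rewrite s_blockedE.
apply/idPn; rewrite !negb_or negbK => /and3P [HxZ HeZ Hso].
have [p' [H1 H2 H3]] := @build V E H C Hsc p x None None Hp Hso HeZ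
  (fun _ => erefl)
  (fun h => False_ind _ (negP HxZ h))
  (fun u k e => False_ind _ (@someNone _ _ (esym e))).
have := Hd x p' H1 HA ltac:(by rewrite H2).
by rewrite d_blockedE H2 H3 (negbTE HxZ) (negbTE HeZ).
Qed.

Local Open Scope ring_scope.

Theorem mainTheorem8 (R : realType) (V : finType) (E : rel V)
  (H : {set {set V}}) (HH : simplicial_complex H)
  (dT : V -> measure_display) (T : forall v, measurableType (dT v))
  (HT : forall v, standard_borel R (T v))
  (d : measure_display) (Omega : measurableType d) (P : probability Omega R)
  (X : forall v, Omega -> T v) (mX : forall v, measurable_fun setT (X v)) :
  (directed_global_Markov E H P X -> general_directed_global_Markov E H P X) /\
  ((forall v w : V, w \in sc E v -> [set v; w] \in H) ->
   general_directed_global_Markov E H P X -> directed_global_Markov E H P X).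
Proof.
split.
- move=> HD A B C Hs; apply: HD; exact: sigma_d.
- move=> Hsc HG A B C Hd; apply: HG; exact: d_sigma.
Qed.
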